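(* Let $n\ge 2$, let $a_1,\dots,a_n$ be positive integers, let $b\ge 0$ be an integer, and let $M$ be the least common multiple of $a_1,\dots,a_n$. Let $b'=\lfloor b/M\rfloor$ and let $r$ be the remainder of $b$ modulo $M$ (so $0\le r<M$ and $b=b'M+r$). For an integer $c$, let $P'(c)$ denote the number of $n$-tuples $(t_1,\dots,t_n)$ of integers satisfying $$\sum_{j=1}^n a_jt_j=c,\qquad 0\le t_j\le \frac{M}{a_j}-1\quad (j=1,\dots,n),$$ and set $l_i=P'(r+(i-1)M)$ for $i=1,\dots,n$. Let $P(b)$ be the number of $n$-tuples $(x_1,\dots,x_n)$ of non-negative integers with $\sum_{i=1}^n a_ix_i=b$. Then $$P(b)=\sum_{i=1}^n l_i\, C(b'+2-i;\,n-1).$$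
   Context: For a real number $k$ and a non-negative integer $l$, define $C(k;l)=\frac{1}{l!}\,k(k+1)\cdots(k+l-1)$ if $k$ is a positive integer (natural number), and $C(k;l)=0$ otherwise (in particular $C(k;l)=0$ whenever $k$ is not an integer or $k\le 0$). *)

(* Defs.v *)
From mathcomp Require Import all_boot all_order all_algebra.
Set Implicit Arguments. Unset Strict Implicit. Unset Printing Implicit Defensive.
Import GRing.Theory Num.Theory.

(* C(k;l) = k(k+1)...(k+l-1)/l! for a positive integer k, and 0 otherwise.
   For k >= 1 this equals the binomial 'C(k+l-1, l). *)
Definition Cpoch (k : int) (l : nat) : nat :=
  match k with
  | Posz (S k') => \prod_(j < l) (k' + j).+1 %/ l`!
  | _ => 0
  end.

Definition lcm_seq n (a : 'I_n -> nat) : nat := \big[lcmn/1]_(i < n) a i.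

(* P'(c): number of tuples t with sum a_j t_j = c and 0 <= t_j <= M/a_j - 1.
   Coordinates are taken in 'I_M (t_j < M/a_j <= M, so no loss). *)
Definition Pprime n (a : 'I_n -> nat) (c : nat) : nat :=
  let M := lcm_seq a in
  #|[set t : {ffun 'I_n -> 'I_M} |
      [forall j, (t j : nat) < M %/ a j] &&
      (\sum_(j < n) a j * t j == c)]|.

(* P(b): number of tuples of nonnegative integers x with sum a_i x_i = b.
   Coordinates are taken in 'I_(b.+1): since a_i >= 1, any solution has x_i <= b. *)
Definition Pcount n (a : 'I_n -> nat) (b : nat) : nat :=
  #|[set x : {ffun 'I_n -> 'I_b.+1} | \sum_(i < n) a i * x i == b]|.

(* Main.v *)
Require Import Defs.
From mathcomp Require Import all_boot all_order all_algebra zify.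
Set Implicit Arguments. Unset Strict Implicit. Unset Printing Implicit Defensive.

Lemma cpoch_pos m l : Cpoch (Posz m.+1) l = 'C(m + l, l).
Proof.
rewrite /Cpoch bin_ffactd ffact_prod; congr (_ %/ _).
rewrite (reindex_inj rev_ord_inj) /=; apply: eq_bigr => i _.
have := ltn_ord i; lia.
Qed.

Lemma cpoch_nonpos (k : int) l : (k <= 0)%R -> Cpoch k l = 0.
Proof. by case: k => [[|k]|k]. Qed.
Lemma comp_count m k K : k <= K ->
  \sum_(s : {ffun 'I_m.+1 -> 'I_K.+1} | \sum_i (s i : nat) == k) 1 = 'C(m + k, m).
Proof.
move=> kK.
rewrite -(card_ord_partitions m k) -sum1_card.
pose h : m.+1.-tuple 'I_k.+1 -> {ffun 'I_m.+1 -> 'I_K.+1} :=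
  fun t => [ffun i => inord (tnth t i)].
pose h' := fun s : {ffun 'I_m.+1 -> 'I_K.+1} => [tuple (inord (s i) : 'I_k.+1) | i < m.+1].
have hv : forall t i, (h t i : nat) = tnth t i.
  move=> t i; rewrite /h ffunE inordK //.
  exact: leq_trans (ltn_ord (tnth t i)) _.
rewrite (reindex h); last first.
  exists h' => [t _ | s].
    apply: eq_from_tnth => i.
    rewrite tnth_mktuple; apply: ord_inj => /=; rewrite /h ffunE !inordK //; exact: leq_trans (ltn_ord (tnth t i)) _.
  rewrite inE => /eqP Hs; apply/ffunP => i.
  have si : s i <= k.
    rewrite -Hs (bigD1 i) //=; exact: leq_addr.
  apply: ord_inj => /=; rewrite /h ffunE tnth_mktuple !inordK //; exact: leq_trans si _.
apply: eq_bigl => t; rewrite inE big_tuple.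
by under eq_bigr do rewrite hv.
Qed.

Lemma count_s n' M b c : 0 < M -> c %/ M < n'.+1 ->
  \sum_(s : {ffun 'I_n'.+1 -> 'I_b.+1} | c + M * \sum_j (s j : nat) == b) 1 =
  \sum_(i < n'.+1) (if c == b %% M + i * M
                    then Cpoch ((b %/ M + 2)%:Z - (i.+1)%:Z)%R n' else 0).
Proof.
move=> M0 hc.
have hb := divn_eq b M; have hcc := divn_eq c M.
have rM : b %% M < M by rewrite ltn_pmod.
case E: (c %% M == b %% M); last first.
  rewrite big_pred0; last first.
    move=> s; apply/negP => /eqP Hs; move: E; rewrite -Hs [c + _]addnC mulnC modnMDl eqxx //.
  rewrite big1 // => i _.
  case: ifP => // /eqP Hc; move: E; rewrite Hc addnC modnMDl modn_mod eqxx //.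
set i0 := c %/ M.
rewrite [RHS](bigD1 (Ordinal hc)) //= [X in _ + X]big1 ?addn0; last first.
  move=> i /eqP Hi; case: ifP => // /eqP Hc; case: Hi; apply: ord_inj => /=.
  by rewrite /i0 Hc addnC divnMDl // divn_small // addn0.
have -> : c == b %% M + i0 * M.
  by rewrite {1}hcc (eqP E) addnC.
have Heq : forall x, (c + M * x == b) = (i0 + x == b %/ M).
  have Hc' : c = i0 * M + b %% M by rewrite {1}hcc (eqP E).
  move=> x; rewrite Hc'; clear Hc' hcc E.
  move: hb.
  move: (b %/ M) (b %% M) i0 => B R I ->.
  rewrite -[RHS](eqn_pmul2r M0).
  apply/eqP/eqP => H; lia.
under eq_bigl do rewrite Heq.
case: (leqP i0 (b %/ M)) => hi.
  have -> : ((b %/ M + 2)%:Z - (i0.+1)%:Z)%R = Posz (b %/ M - i0).+1.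
    rewrite subzn; last lia. congr Posz; lia.
  rewrite cpoch_pos [X in 'C(X, _)]addnC -(@comp_count n' _ b); last first.
    apply: leq_trans (leq_subr _ _) (leq_div _ _).
  apply: eq_bigl => s; apply/eqP/eqP => H; [by rewrite -H addKn | by rewrite H subnKC].
rewrite cpoch_nonpos; last first.
  rewrite Num.Theory.subr_le0 lez_nat; lia.
rewrite big_pred0 // => s; apply/eqP => H; lia.
Qed.

Theorem mainTheorem3 (n : nat) (a : 'I_n -> nat) (b : nat) :
  2 <= n ->
  (forall i, 0 < a i) ->
  let M := lcm_seq a in
  let b' := b %/ M in
  let r := b %% M in
  Pcount a b =
  \sum_(i < n)
     Pprime a (r + i * M) *
     Cpoch ((b' + 2)%:Z - (i.+1)%:Z)%R (n - 1).
Proof.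
move=> hn ha; cbv zeta.
case: n a hn ha => [|n'] // a hn ha.
rewrite subSS subn0.
have PP c : Pprime a c = \sum_(t : {ffun 'I_n'.+1 -> 'I_(lcm_seq a)} |
    [forall j, (t j : nat) < lcm_seq a %/ a j] && (\sum_j a j * t j == c)) 1.
  by rewrite /Pprime -sum1_card; apply: eq_bigl => x; rewrite inE.
under eq_bigr do rewrite PP big_distrl /= big_mkcondr /=.
have -> : Pcount a b = \sum_(x : {ffun 'I_n'.+1 -> 'I_b.+1} | \sum_i a i * x i == b) 1.
  by rewrite /Pcount -sum1_card; apply: eq_bigl => x; rewrite inE.
set M := lcm_seq a.
have M0 : 0 < M.
  rewrite /M /lcm_seq; elim/big_ind: _ => //= x y; rewrite lcmn_gt0 => -> -> //.
have adM j : a j %| M := biglcmn_sup j isT (dvdnn (a j)).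
pose d j := M %/ a j.
have dM j : d j * a j = M := divnK (adM j).
have d0 j : 0 < d j by rewrite /d divn_gt0 ?ha // (dvdn_leq M0 (adM j)).
have dle j : d j <= M := leq_div _ _.
have tlt (x : nat) j : x %% d j < M := leq_trans (ltn_pmod x (d0 j)) (dle j).
pose ok (t : {ffun 'I_n'.+1 -> 'I_M}) := [forall j, (t j : nat) < d j].
pose tof (x : {ffun 'I_n'.+1 -> 'I_b.+1}) : {ffun 'I_n'.+1 -> 'I_M} :=
  [ffun j => Ordinal (tlt (x j) j)].
rewrite (partition_big tof ok); last first.
  by move=> x _; apply/forallP => j; rewrite ffunE /= ltn_pmod.
rewrite exchange_big /=; apply: eq_bigr => t okt.
have tjd j : (t j : nat) < d j by exact: (forallP okt j).
have sumE (s : {ffun 'I_n'.+1 -> 'I_b.+1}) :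
  \sum_j a j * t j + M * \sum_j (s j : nat) = \sum_j a j * (t j + d j * s j).
  rewrite big_distrr -big_split /=; apply: eq_bigr => j _.
  by rewrite mulnDr mulnA [a j * d j]mulnC dM.
have bnd (y : 'I_n'.+1 -> nat) j : \sum_j a j * y j = b -> y j <= b.
  move=> H; rewrite -H (bigD1 j) //=; apply: leq_trans (leq_addr _ _).
  by rewrite leq_pmull.
transitivity (\sum_(s : {ffun 'I_n'.+1 -> 'I_b.+1} |
    \sum_j a j * t j + M * \sum_j (s j : nat) == b) 1); last first.
  rewrite count_s //; last first.
    rewrite ltn_divLR //.
    have : \sum_j a j * t j <= \sum_(j < n'.+1) (M - 1).
      apply: leq_sum => j _; have := tjd j; have := dM j; have := ha j; nia.
    rewrite sum_nat_const card_ord => H; apply: leq_ltn_trans H _; nia.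
  by apply: eq_bigr => i _; rewrite mul1n.
have slt (x : {ffun 'I_n'.+1 -> 'I_b.+1}) j : x j %/ d j < b.+1 :=
  leq_ltn_trans (leq_div _ _) (ltn_ord (x j)).
pose sof (x : {ffun 'I_n'.+1 -> 'I_b.+1}) : {ffun 'I_n'.+1 -> 'I_b.+1} :=
  [ffun j => Ordinal (slt x j)].
pose xof (s : {ffun 'I_n'.+1 -> 'I_b.+1}) : {ffun 'I_n'.+1 -> 'I_b.+1} :=
  [ffun j => inord (t j + d j * s j)].
symmetry; rewrite (reindex_onto sof xof); last first.
  move=> s /eqP Hq; apply/ffunP => j; apply: ord_inj; rewrite /sof /xof /= !ffunE /= ffunE /= inordK.
    by rewrite addnC mulnC divnMDl // divn_small ?addn0.
  rewrite ltnS; apply: (bnd (fun j => t j + d j * s j)); by rewrite -sumE.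
apply: eq_bigl => x.
have modx j : x j %% d j + d j * (x j %/ d j) = x j by rewrite addnC mulnC -divn_eq.
rewrite sumE; apply/idP/idP.
  case/andP => /eqP Hq /eqP Hx.
  have xj j : (x j : nat) = t j + d j * (x j %/ d j).
    have := congr1 (fun f : {ffun 'I_n'.+1 -> 'I_b.+1} => (f j : nat)) Hx.
    rewrite /= ffunE /= ffunE /= inordK // ltnS.
    apply: (bnd (fun j => t j + d j * (x j %/ d j))); apply: etrans Hq.
    by apply: eq_bigr => i _; rewrite /sof ffunE.
  apply/andP; split.
    apply/eqP; apply: etrans Hq; apply: eq_bigr => j _; rewrite /sof ffunE /=; congr (_ * _); exact: xj.
  apply/eqP/ffunP => j; apply: ord_inj; rewrite /= ffunE /= (xj j).
  by rewrite addnC mulnC modnMDl modn_small.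
case/andP => /eqP Hb /eqP Ht.
have tj j : (t j : nat) = x j %% d j by rewrite -Ht ffunE.
apply/andP; split.
  apply/eqP; apply: (etrans _ Hb); apply: eq_bigr => j _; rewrite /sof ffunE /= tj modx //.
apply/eqP/ffunP => j; apply: ord_inj; rewrite /= ffunE /= ffunE /= tj modx inordK //.
Qed.
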